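(* Let $d\ge2$ be an integer, $\beta>0$, and let $v\in C^1((0,+\infty),\mathbb{R})$ satisfy \[ \limsup_{r\to0}v'(r)<+\infty\quad\text{and}\quad\frac{v'(r)}{r}\xrightarrow[r\to+\infty]{}+\infty. \] Set $v_*(r)=v(r)-\frac{d-1}{\beta}\ln r$, $\pi_*(dr)=Z_*^{-1}e^{-\beta v_*(r)}dr$ on $(0,+\infty)$ and $r_*=\int_0^\infty r\,\pi_*(dr)$. Then the equation \[ \beta^{-1}\varphi'(r) = r_* - r + v_*'(r)\varphi(r),\qquad r>0, \] admits a unique solution $\varphi\in\mathrm{L}^2(\pi_* )$ whose primitives belong to $\mathrm{L}^2(\pi_* )$. Moreover this solution extends continuously to $[0,+\infty)$ with $\varphi(0)=0$, and $\varphi(r)\to0$ as $r\to+\infty$. *)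

(* Defs.v *)
From Stdlib Require Import Reals Lra.
Open Scope R_scope.

Definition vstar (d : nat) (beta : R) (v : R -> R) (r : R) : R :=
  v r - (INR d - 1) / beta * ln r.

(* unnormalised density of pi_star : e^{-beta v_star(r)} ; pi_star = dens / Z_star *)
Definition dens (d : nat) (beta : R) (v : R -> R) (r : R) : R :=
  exp (- beta * vstar d beta v r).

Definition improper_int0inf (f : R -> R) (l : R) : Prop :=
  (forall a b, 0 < a -> a <= b -> inhabited (Riemann_integrable f a b)) /\
  (forall eps, eps > 0 -> exists a0 b0, 0 < a0 < b0 /\
     forall a b (pr : Riemann_integrable f a b),
       0 < a <= a0 -> b0 <= b -> Rabs (RiemannInt pr - l) < eps).

(* f in L^2(pi_star) (normalisation constant irrelevant), for continuous f *)
Definition L2pistar (d : nat) (beta : R) (v : R -> R) (f : R -> R) : Prop :=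
  exists l, improper_int0inf (fun r => f r ^ 2 * dens d beta v r) l.

Definition good_solution (d : nat) (beta : R) (v v' : R -> R) (rstar : R)
    (phi : R -> R) : Prop :=
  (exists phi' : R -> R, forall r, 0 < r ->
      derivable_pt_lim phi r (phi' r) /\
      / beta * phi' r = rstar - r + (v' r - (INR d - 1) / beta / r) * phi r) /\
  L2pistar d beta v phi /\
  (exists Phi : R -> R,
      (forall r, 0 < r -> derivable_pt_lim Phi r (phi r)) /\ L2pistar d beta v Phi).

(* Main.v *)
Require Import Defs.
From Stdlib Require Import Reals Lra.
From Coquelicot Require Import Coquelicot.
Open Scope R_scope.

Lemma is_derive_eqv (f : R -> R) x l1 l2 : is_derive f x l1 -> l1 = l2 -> is_derive f x l2.
Proof. intros H ->; exact H. Qed.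

Lemma cont_of_der (f : R -> R) x l : is_derive f x l -> continuous f x.
Proof. intros H. apply (@ex_derive_continuous R_AbsRing R_NormedModule). exists l; exact H. Qed.

Lemma contpt_of_der (f : R -> R) x l : is_derive f x l -> continuity_pt f x.
Proof. intros H. apply continuity_pt_filterlim. apply (cont_of_der f x l H). Qed.

Lemma LM (K dK : R -> R) a b : a <= b ->
  (forall x, a <= x <= b -> is_derive K x (dK x)) ->
  (forall x, a <= x <= b -> dK x <= 0) -> K b <= K a.
Proof.
  intros hab hd hn.
  destruct (MVT_gen K a b dK) as [c [hc e]].
  - intros x hx. rewrite Rmin_left in hx by lra. rewrite Rmax_right in hx by lra.
    apply hd; lra.
  - intros x hx. rewrite Rmin_left in hx by lra. rewrite Rmax_right in hx by lra.
    apply (contpt_of_der _ _ (dK x)). apply hd; lra.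
  - rewrite Rmin_left in hc by lra. rewrite Rmax_right in hc by lra.
    assert (dK c <= 0) by (apply hn; lra).
    assert (dK c * (b - a) <= 0) by (apply Rmult_le_0_r; lra). lra.
Qed.

Section Pos.
Variable f : R -> R.
Hypothesis Hc : forall x, 0 < x -> continuous f x.

Lemma ex_RInt_pos a b : 0 < a -> 0 < b -> ex_RInt f a b.
Proof.
  intros ha hb. apply (@ex_RInt_continuous R_CompleteNormedModule). intros z hz. apply Hc.
  assert (0 < Rmin a b) by (apply Rmin_glb_lt; lra). lra.
Qed.

Lemma RInt_deriv_pos a x : 0 < a -> 0 < x -> is_derive (fun y => RInt f a y) x (f x).
Proof.
  intros ha hx. apply (@is_derive_RInt R_CompleteNormedModule f _ a); [|apply Hc; auto].
  assert (hp : 0 < x / 2) by lra.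
  exists (mkposreal _ hp). intros y hy. apply RInt_correct. apply ex_RInt_pos; auto.
  change (Rabs (y - x) < x / 2) in hy. apply Rabs_def2 in hy. lra.
Qed.

Lemma RInt_cont_pos a x : 0 < a -> 0 < x -> continuous (fun y => RInt f a y) x.
Proof. intros ha hx. eapply cont_of_der. apply RInt_deriv_pos; auto. Qed.

Hypothesis Hpos : forall x, 0 < x -> 0 <= f x.

Lemma RInt_nonneg a b : 0 < a -> a <= b -> 0 <= RInt f a b.
Proof. intros. apply RInt_ge_0; auto. apply ex_RInt_pos; lra. intros; apply Hpos; lra. Qed.

Lemma RInt_mono_int a a' b' b : 0 < a -> a <= a' -> a' <= b' -> b' <= b ->
  RInt f a' b' <= RInt f a b.
Proof.
  intros. rewrite <- (RInt_Chasles f a a' b); try (apply ex_RInt_pos; lra).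
  rewrite <- (RInt_Chasles f a' b' b); try (apply ex_RInt_pos; lra).
  unfold plus; simpl.
  assert (0 <= RInt f a a') by (apply RInt_nonneg; lra).
  assert (0 <= RInt f b' b) by (apply RInt_nonneg; lra). lra.
Qed.
End Pos.

Lemma LI (f H dH : R -> R) a b : 0 < a -> a <= b ->
  (forall x, 0 < x -> continuous f x) ->
  (forall x, 0 < x -> is_derive H x (dH x)) ->
  (forall x, a <= x <= b -> f x <= - dH x) -> RInt f a b <= H a - H b.
Proof.
  intros ha hab Hc Hd Hle.
  assert (K : (fun y => RInt f a y + H y) b <= (fun y => RInt f a y + H y) a).
  { apply (LM (fun y => RInt f a y + H y) (fun x => f x + dH x) a b); auto.
    - intros x hx. apply (is_derive_plus (fun y => RInt f a y) H).
      apply RInt_deriv_pos; auto; lra. apply Hd; lra.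
    - intros x hx. specialize (Hle x hx). lra. }
  simpl in K. rewrite RInt_point in K. unfold zero in K; simpl in K. lra.
Qed.

Lemma LS (f : R -> R) :
  (forall x, 0 < x -> continuous f x) ->
  (forall x, 0 < x -> 0 <= f x) ->
  (exists K, forall a b, 0 < a -> a <= b -> RInt f a b <= K) ->
  exists l, (forall a b, 0 < a -> a <= b -> RInt f a b <= l) /\
    (forall eps, eps > 0 -> exists a0 b0, 0 < a0 < b0 /\
      forall a b, 0 < a <= a0 -> b0 <= b -> Rabs (RInt f a b - l) < eps).
Proof.
  intros Hc Hp [K HK].
  set (E := fun y => exists a b, 0 < a /\ a <= b /\ y = RInt f a b).
  assert (hb : bound E).
  { exists K. intros y [a [b [ha [hab ->]]]]. apply HK; auto. }
  assert (he : exists x, E x) by (exists (RInt f 1 1); exists 1, 1; repeat split; lra).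
  destruct (completeness E hb he) as [l [hub hlub]].
  exists l. split.
  - intros a b ha hab. apply hub. exists a, b; auto.
  - intros eps heps.
    assert (hex : exists y, E y /\ l - eps < y).
    { apply Classical_Pred_Type.not_all_not_ex. intros hn.
      assert (l <= l - eps); [|lra].
      apply hlub. intros y hy. specialize (hn y).
      destruct (Rle_or_lt y (l - eps)); auto. exfalso; apply hn; auto. }
    destruct hex as [y [[a1 [b1 [ha1 [hab1 ->]]]] hy]].
    exists a1, (b1 + 1). split; [lra|].
    intros a b ha hb2.
    assert (RInt f a1 b1 <= RInt f a b) by (apply (RInt_mono_int f Hc Hp); lra).
    assert (RInt f a b <= l) by (apply hub; exists a, b; repeat split; lra).
    apply Rabs_def1; lra.
Qed.

Lemma LS_improper (f : R -> R) l :
  (forall x, 0 < x -> continuous f x) ->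
  (forall eps, eps > 0 -> exists a0 b0, 0 < a0 < b0 /\
      forall a b, 0 < a <= a0 -> b0 <= b -> Rabs (RInt f a b - l) < eps) ->
  improper_int0inf f l.
Proof.
  intros Hc H. split.
  - intros a b ha hab. constructor. apply ex_RInt_Reals_0. apply ex_RInt_pos; auto; lra.
  - intros eps heps. destruct (H eps heps) as [a0 [b0 [h1 h2]]]. exists a0, b0.
    split; auto. intros a b pr ha hb. rewrite <- RInt_Reals. apply h2; auto.
Qed.

Lemma RInt_ext_R (f g : R -> R) a b :
  (forall x, Rmin a b < x < Rmax a b -> f x = g x) -> RInt f a b = RInt g a b.
Proof. apply (@RInt_ext R_CompleteNormedModule). Qed.
Lemma RInt_opp_R (f : R -> R) a b : ex_RInt f a b -> RInt (fun x => - f x) a b = - RInt f a b.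
Proof. intros H. exact (@RInt_opp R_CompleteNormedModule f a b H). Qed.
Lemma RInt_minus_R (f g : R -> R) a b : ex_RInt f a b -> ex_RInt g a b ->
  RInt (fun x => f x - g x) a b = RInt f a b - RInt g a b.
Proof. intros H1 H2. exact (@RInt_minus R_CompleteNormedModule f g a b H1 H2). Qed.
Lemma RInt_const_R a b (c : R) : RInt (fun _ => c) a b = (b - a) * c.
Proof. exact (@RInt_const R_CompleteNormedModule a b c). Qed.
Lemma RInt_swap_R (f : R -> R) a b : ex_RInt f a b -> - RInt f a b = RInt f b a.
Proof. intros H. exact (@opp_RInt_swap R_CompleteNormedModule f a b H). Qed.
Lemma RInt_scal_R (f : R -> R) a b k : ex_RInt f a b -> RInt (fun x => k * f x) a b = k * RInt f a b.
Proof. intros H. exact (@RInt_scal R_CompleteNormedModule f a b k H). Qed.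
Lemma RInt_Chasles_R (f : R -> R) a b c : ex_RInt f a b -> ex_RInt f b c ->
  RInt f a b + RInt f b c = RInt f a c.
Proof. intros H1 H2. exact (@RInt_Chasles R_CompleteNormedModule f a b c H1 H2). Qed.

Lemma le_of_forall_lt x y : (forall eta, eta > 0 -> x < eta + y) -> x <= y.
Proof.
  intros H. destruct (Rle_or_lt x y); auto.
  specialize (H ((x - y) / 2) ltac:(lra)). lra.
Qed.

Lemma exp_le' x y : x <= y -> exp x <= exp y.
Proof. intros [h | ->]; [left; apply exp_increasing; auto | right; auto]. Qed.
Lemma ln_le' x y : 0 < x -> x <= y -> ln x <= ln y.
Proof. intros hx [h | ->]; [left; apply ln_increasing; auto | right; auto]. Qed.

Section S.
Variables (d : nat) (beta : R) (v v' : R -> R).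
Hypothesis hd : (2 <= d)%nat.
Hypothesis hbeta : 0 < beta.
Hypothesis hv : forall r, 0 < r -> derivable_pt_lim v r (v' r).
Hypothesis hv'c : forall r, 0 < r -> continuity_pt v' r.
Variables (C delta : R).
Hypothesis hdel : 0 < delta.
Hypothesis hC : forall r, 0 < r < delta -> v' r <= C.

Definition D r := dens d beta v r.
Definition vs' r := v' r - (INR d - 1) / beta / r.

Lemma INRd : 2 <= INR d.
Proof. change 2 with (INR 2). apply le_INR; auto. Qed.

Lemma D_pos r : 0 < D r.
Proof. unfold D, dens. apply exp_pos. Qed.

Lemma D_deriv r : 0 < r -> is_derive D r (- beta * vs' r * D r).
Proof.
  intros hr. unfold D, dens, vstar, vs'.
  assert (Hv : is_derive v r (v' r)) by (apply is_derive_Reals; auto).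
  evar (e : R).
  assert (H : is_derive (fun r => exp (- beta * (v r - (INR d - 1) / beta * ln r))) r ?e).
  { apply (is_derive_comp exp (fun r => - beta * (v r - (INR d - 1) / beta * ln r))).
    - apply is_derive_Reals. apply derivable_pt_lim_exp.
    - apply @is_derive_scal. apply @is_derive_minus. exact Hv.
      apply @is_derive_scal. apply is_derive_Reals. apply derivable_pt_lim_ln. exact hr. }
  unfold e in H. eapply is_derive_eqv. exact H.
  unfold scal, minus, plus, opp; simpl; unfold mult; simpl. unfold Rdiv. ring.
Qed.

Lemma D_cont r : 0 < r -> continuous D r.
Proof. intros hr. eapply cont_of_der. apply D_deriv; auto. Qed.

Lemma v_lip0 s r : 0 < s -> s <= r -> r < delta -> v r - v s <= Rabs C * (r - s).
Proof.
  intros hs hsr hr.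
  destruct (MVT_gen v s r v') as [c [hc e]].
  - intros x hx. rewrite Rmin_left in hx by lra. rewrite Rmax_right in hx by lra.
    apply is_derive_Reals; apply hv; lra.
  - intros x hx. rewrite Rmin_left in hx by lra. rewrite Rmax_right in hx by lra.
    apply (contpt_of_der _ _ (v' x)). apply is_derive_Reals; apply hv; lra.
  - rewrite Rmin_left in hc by lra. rewrite Rmax_right in hc by lra.
    rewrite e. apply Rmult_le_compat_r; [lra|].
    assert (v' c <= C) by (apply hC; lra). pose proof (Rle_abs C). lra.
Qed.

Definition A0 := exp (beta * Rabs C * delta).

Lemma D_ratio0 s r : 0 < s -> s <= r -> r < delta -> D s <= A0 * D r.
Proof.
  intros hs hsr hr. unfold A0, D, dens. rewrite <- exp_plus. apply exp_le'.
  unfold vstar.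
  assert (h1 := v_lip0 s r hs hsr hr).
  assert (h2 := ln_le' s r hs hsr).
  assert (h3 := INRd).
  assert (h4 : (INR d - 1) / beta * beta = INR d - 1) by (field; lra).
  assert (beta * (v r - v s) <= beta * (Rabs C * (r - s))) by (apply Rmult_le_compat_l; lra).
  assert (beta * Rabs C * (r - s) <= beta * Rabs C * delta).
  { apply Rmult_le_compat_l. pose proof (Rabs_pos C). nra. lra. }
  assert ((INR d - 1) * ln s <= (INR d - 1) * ln r) by (apply Rmult_le_compat_l; lra).
  assert (e : - beta * (v s - (INR d - 1) / beta * ln s) =
     - beta * v s + (INR d - 1) * ln s) by (field; lra).
  assert (e2 : - beta * (v r - (INR d - 1) / beta * ln r) =
     - beta * v r + (INR d - 1) * ln r) by (field; lra).
  rewrite e, e2. nra.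
Qed.

Definition K0 := exp (- beta * v (delta / 2) + beta * Rabs C * delta).

Lemma D_small0 s : 0 < s -> s <= delta / 2 -> s <= 1 -> D s <= K0 * s.
Proof.
  intros hs h1 h2. unfold K0, D, dens, vstar.
  apply Rle_trans with (exp (- beta * v (delta / 2) + beta * Rabs C * delta + ln s)).
  2:{ rewrite exp_plus, exp_ln by auto. lra. }
  apply exp_le'.
  assert (h3 := v_lip0 s (delta/2) hs h1 ltac:(lra)).
  assert (h4 : ln s <= 0) by (rewrite <- ln_1; apply ln_le'; lra).
  assert (h5 := INRd).
  assert (e : - beta * (v s - (INR d - 1) / beta * ln s) =
     - beta * v s + (INR d - 1) * ln s) by (field; lra).
  rewrite e.
  assert (beta * (v (delta/2) - v s) <= beta * (Rabs C * (delta/2 - s))) by (apply Rmult_le_compat_l; lra).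
  assert (beta * Rabs C * (delta/2 - s) <= beta * Rabs C * delta).
  { apply Rmult_le_compat_l. pose proof (Rabs_pos C). nra. lra. }
  assert ((INR d - 1) * ln s <= ln s) by nra.
  nra.
Qed.


Hypothesis hlimoo : forall M, exists R0, forall r, R0 < r -> v' r / r > M.

Lemma vs'_big L : exists R, 1 <= R /\ forall r, R <= r -> L * r <= beta * vs' r.
Proof.
  destruct (hlimoo ((Rabs L + INR d) / beta)) as [R0 HR0].
  exists (Rmax 1 (R0 + 1)). split; [apply Rmax_l|].
  intros r hr. pose proof (Rmax_l 1 (R0+1)). pose proof (Rmax_r 1 (R0+1)).
  assert (h1 := HR0 r ltac:(lra)).
  assert (hr0 : 0 < r) by lra.
  assert (h2 : beta * v' r > (Rabs L + INR d) * r).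
  { apply Rmult_gt_compat_r with (r := r) in h1; [|lra].
    unfold Rdiv in h1. rewrite Rmult_assoc, Rinv_l, Rmult_1_r in h1 by lra.
    apply Rmult_gt_compat_l with (r := beta) in h1; [|lra].
    replace (beta * ((Rabs L + INR d) * / beta * r)) with ((Rabs L + INR d) * r) in h1 by (field; lra).
    lra. }
  assert (h3 : beta * vs' r = beta * v' r - (INR d - 1) / r) by (unfold vs'; field; lra).
  assert (h4 := INRd).
  assert (h5 : (INR d - 1) / r <= INR d - 1).
  { unfold Rdiv. rewrite <- (Rmult_1_r (INR d - 1)) at 2. apply Rmult_le_compat_l; [lra|].
    rewrite <- Rinv_1. apply Rinv_le_contravar; lra. }
  pose proof (Rle_abs L).
  assert (L * r <= Rabs L * r) by (apply Rmult_le_compat_r; lra).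
  assert (INR d <= INR d * r) by nra.
  lra.
Qed.

Definition h s := (1 + s ^ 2) * D s.
Definition h' s := 2 * s * D s + (1 + s ^ 2) * (- beta * vs' s * D s).

Lemma h_deriv s : 0 < s -> is_derive h s (h' s).
Proof.
  intros hs. unfold h, h'.
  eapply is_derive_eqv.
  apply (is_derive_mult (fun s => 1 + s ^ 2) D). 2: apply D_deriv; auto.
  auto_derive; auto.
  intros; apply Rmult_comm.
  unfold plus, mult; simpl. ring.
Qed.

Lemma h_cont s : 0 < s -> continuous h s.
Proof. intros hs. eapply cont_of_der. apply h_deriv; auto. Qed.

Lemma h_pos s : 0 < h s.
Proof. unfold h. pose proof (D_pos s). nra. Qed.

Lemma h_decay : exists R, 1 <= R /\ forall s, R <= s -> h s <= - h' s /\ h' s <= 0.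
Proof.
  destruct (vs'_big 2) as [R [hR HR]]. exists R. split; auto.
  intros s hs. specialize (HR s hs). pose proof (D_pos s). pose proof (h_pos s).
  unfold h, h' in *.
  assert (2 * s <= 1 + s ^ 2) by nra.
  assert (e : 2 * s * D s + (1 + s ^ 2) * (- beta * vs' s * D s) =
     D s * (2 * s - (1 + s ^ 2) * (beta * vs' s))) by ring.
  rewrite e.
  assert (2 * s - (1 + s ^ 2) * (beta * vs' s) <= - (1 + s^2)).
  { assert ((1 + s ^ 2) * (2 * s) <= (1 + s ^ 2) * (beta * vs' s)) by (apply Rmult_le_compat_l; nra).
    nra. }
  split; nra.
Qed.

Lemma h_int_bound : exists K, forall a b, 0 < a -> a <= b -> RInt h a b <= K.
Proof.
  destruct h_decay as [R [hR HR]].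
  set (d1 := Rmin (delta / 2) 1).
  assert (hd1 : 0 < d1) by (apply Rmin_glb_lt; lra).
  assert (hd1a : d1 <= delta / 2) by apply Rmin_l.
  assert (hd1b : d1 <= 1) by apply Rmin_r.
  exists (d1 * (2 * (A0 * D d1)) + RInt h d1 R + h R).
  intros a b ha hab.
  set (a' := Rmin a d1). set (b' := Rmax b R).
  assert (ha'1 : a' <= a) by apply Rmin_l. assert (ha'2 : a' <= d1) by apply Rmin_r.
  assert (ha'3 : 0 < a') by (apply Rmin_glb_lt; lra).
  assert (hb'1 : b <= b') by apply Rmax_l. assert (hb'2 : R <= b') by apply Rmax_r.
  assert (hpos : forall x, 0 < x -> 0 <= h x) by (intros; left; apply h_pos).
  apply Rle_trans with (RInt h a' b').
  { apply (RInt_mono_int h h_cont hpos); lra. }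
  rewrite <- (RInt_Chasles h a' d1 b'); try (apply ex_RInt_pos; try lra; apply h_cont).
  rewrite <- (RInt_Chasles h d1 R b'); try (apply ex_RInt_pos; try lra; apply h_cont).
  unfold plus; simpl.
  assert (I1 : RInt h a' d1 <= d1 * (2 * (A0 * D d1))).
  { assert (Rabs (RInt h a' d1) <= (d1 - a') * (2 * (A0 * D d1))).
    { apply abs_RInt_le_const; auto. apply ex_RInt_pos; auto; apply h_cont.
      intros t ht. rewrite Rabs_pos_eq by (apply hpos; lra). unfold h.
      assert (D t <= A0 * D d1) by (apply D_ratio0; lra).
      pose proof (D_pos t). assert (t ^ 2 <= 1) by nra.
      assert ((1 + t ^ 2) * D t <= 2 * D t) by nra. lra. }
    pose proof (Rle_abs (RInt h a' d1)).
    assert (0 <= A0 * D d1) by (pose proof (D_pos d1); unfold A0; pose proof (exp_pos (beta * Rabs C * delta)); nra).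
    nra. }
  assert (I2 : RInt h R b' <= h R - h b').
  { apply (LI h h h'); try lra. apply h_cont. apply h_deriv.
    intros x hx. apply HR; lra. }
  pose proof (h_pos b'). lra.
Qed.

Lemma bound_by_h (f : R -> R) c : 0 <= c ->
  (forall x, 0 < x -> continuous f x) ->
  (forall x, 0 < x -> f x <= c * h x) ->
  exists K, forall a b, 0 < a -> a <= b -> RInt f a b <= K.
Proof.
  intros hc Hc Hle. destruct h_int_bound as [K HK]. exists (c * K).
  intros a b ha hab.
  apply Rle_trans with (RInt (fun x => c * h x) a b).
  { apply RInt_le; auto. apply ex_RInt_pos; auto; lra.
    apply ex_RInt_pos; try lra. intros; apply (continuous_scal_r c h). apply h_cont; auto.
    intros; apply Hle; lra. }
  assert (e := RInt_scal h a b c). unfold scal in e; simpl in e; unfold mult in e; simpl in e.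
  rewrite e. 2: apply ex_RInt_pos; try lra; apply h_cont.
  apply Rmult_le_compat_l; auto.
Qed.


Variables Z m1 : R.
Hypothesis hZub : forall a b, 0 < a -> a <= b -> RInt D a b <= Z.
Hypothesis hZlim : forall eps, eps > 0 -> exists a0 b0, 0 < a0 < b0 /\
      forall a b, 0 < a <= a0 -> b0 <= b -> Rabs (RInt D a b - Z) < eps.
Hypothesis hm1ub : forall a b, 0 < a -> a <= b -> RInt (fun s => s * D s) a b <= m1.
Hypothesis hm1lim : forall eps, eps > 0 -> exists a0 b0, 0 < a0 < b0 /\
      forall a b, 0 < a <= a0 -> b0 <= b -> Rabs (RInt (fun s => s * D s) a b - m1) < eps.
Hypothesis hZpos : 0 < Z.

Definition rstar := m1 / Z.

Lemma m1_nonneg : 0 <= m1.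
Proof. assert (H := hm1ub 1 1 ltac:(lra) ltac:(lra)). rewrite RInt_point in H. exact H. Qed.

Lemma rstar_nonneg : 0 <= rstar.
Proof. unfold rstar. pose proof m1_nonneg. apply Rmult_le_pos; auto. left; apply Rinv_0_lt_compat; auto. Qed.

Definition D0 s := if Rlt_dec 0 s then D s else 0.
Definition g0 s := (rstar - s) * D0 s.

Lemma D0_eq s : 0 < s -> D0 s = D s.
Proof. intros hs. unfold D0. destruct (Rlt_dec 0 s); [auto | lra]. Qed.

Lemma D0_bound s : Rabs s <= Rmin (delta / 2) 1 -> Rabs (D0 s) <= K0 * Rabs s.
Proof.
  intros hs. pose proof (Rmin_l (delta/2) 1). pose proof (Rmin_r (delta/2) 1).
  unfold D0. destruct (Rlt_dec 0 s).
  - rewrite Rabs_pos_eq in hs by lra. rewrite !Rabs_pos_eq by (try lra; left; apply D_pos).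
    apply D_small0; lra.
  - rewrite Rabs_R0. apply Rmult_le_pos. unfold K0; left; apply exp_pos. apply Rabs_pos.
Qed.

Lemma D0_cont s : 0 <= s -> continuous D0 s.
Proof.
  intros [hs | <-].
  - apply (continuous_ext_loc _ D). 2: apply D_cont; auto.
    assert (hp : 0 < s / 2) by lra.
    exists (mkposreal _ hp). intros y hy.
    change (Rabs (y - s) < s / 2) in hy. apply Rabs_def2 in hy. rewrite D0_eq; auto; lra.
  - apply continuity_pt_filterlim.
    intros eps heps.
    assert (hK : 0 < K0) by (unfold K0; apply exp_pos).
    set (al := Rmin (Rmin (delta / 2) 1) (eps / (K0 + 1))).
    assert (hal : 0 < al).
    { apply Rmin_glb_lt. apply Rmin_glb_lt; lra. apply Rdiv_lt_0_compat; lra. }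
    exists al. split; auto. intros x [_ hx]. simpl in hx. unfold R_dist in hx |- *.
    simpl; unfold R_dist. rewrite Rminus_0_r in hx. unfold al in hx.
    assert (D0 0 = 0) by (unfold D0; destruct (Rlt_dec 0 0); [lra | auto]).
    rewrite H, Rminus_0_r.
    assert (h1 : Rabs x < Rmin (delta / 2) 1) by (pose proof (Rmin_l (Rmin (delta / 2) 1) (eps / (K0 + 1))); lra).
    assert (h2 : Rabs x < eps / (K0 + 1)) by (pose proof (Rmin_r (Rmin (delta / 2) 1) (eps / (K0 + 1))); lra).
    assert (h3 := D0_bound x ltac:(lra)).
    assert (K0 * Rabs x <= K0 * (eps / (K0 + 1))) by (apply Rmult_le_compat_l; lra).
    assert (K0 * (eps / (K0 + 1)) < eps).
    { apply Rmult_lt_reg_r with (K0 + 1); [lra|].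
      replace (K0 * (eps / (K0 + 1)) * (K0 + 1)) with (K0 * eps) by (field; lra). nra. }
    lra.
Qed.

Lemma g0_cont s : 0 <= s -> continuous g0 s.
Proof.
  intros hs. unfold g0. apply (continuous_mult (fun s => rstar - s) D0).
  apply (continuous_minus (fun _ => rstar) (fun s => s)). apply continuous_const. apply continuous_id.
  apply D0_cont; auto.
Qed.

Definition G r := RInt g0 0 r.

Lemma ex_RInt_g0 a b : 0 <= a -> 0 <= b -> ex_RInt g0 a b.
Proof.
  intros ha hb. apply (@ex_RInt_continuous R_CompleteNormedModule). intros z hz. apply g0_cont.
  assert (0 <= Rmin a b) by (apply Rmin_glb; lra). lra.
Qed.

Lemma G_deriv r : 0 < r -> is_derive G r (g0 r).
Proof.
  intros hr. apply (@is_derive_RInt R_CompleteNormedModule g0 _ 0); [|apply g0_cont; lra].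
  assert (hp : 0 < r / 2) by lra.
  exists (mkposreal _ hp). intros y hy. apply RInt_correct. apply ex_RInt_g0; try lra.
  change (Rabs (y - r) < r / 2) in hy. apply Rabs_def2 in hy. lra.
Qed.

Definition phi r := beta * G r / D r.

Lemma phi_deriv r : 0 < r -> is_derive phi r (beta * (rstar - r + vs' r * phi r)).
Proof.
  intros hr. unfold phi. eapply is_derive_eqv.
  apply is_derive_div. apply is_derive_scal. apply G_deriv; auto. apply D_deriv; auto.
  pose proof (D_pos r); lra.
  unfold g0. rewrite D0_eq by auto. pose proof (D_pos r). change (@eq R (((beta * ((rstar - r) * D r) * D r - beta * G r * (- beta * vs' r * D r)) / D r ^ 2)) (beta * (rstar - r + vs' r * (beta * G r / D r)))). field. lra.
Qed.

Lemma phi_cont r : 0 < r -> continuous phi r.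
Proof. intros hr. eapply cont_of_der. apply phi_deriv; auto. Qed.


Definition c0 := beta * (rstar + delta) * A0.

Lemma A0_pos : 0 < A0.
Proof. unfold A0; apply exp_pos. Qed.

Lemma phi_near0 r : 0 < r < delta -> Rabs (phi r) <= c0 * r.
Proof.
  intros hr. pose proof rstar_nonneg. pose proof A0_pos. pose proof (D_pos r).
  assert (HG : Rabs (G r) <= (r - 0) * ((rstar + delta) * (A0 * D r))).
  { apply abs_RInt_le_const; [lra | apply ex_RInt_g0; lra |].
    intros t ht. unfold g0. rewrite Rabs_mult.
    destruct (Req_dec t 0) as [-> | ht0].
    - unfold D0. destruct (Rlt_dec 0 0); [lra|]. rewrite Rabs_R0, Rmult_0_r. apply Rmult_le_pos; [lra|]. apply Rmult_le_pos; lra.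
    - rewrite D0_eq by lra. rewrite (Rabs_pos_eq (D t)) by (left; apply D_pos).
      assert (D t <= A0 * D r) by (apply D_ratio0; lra).
      assert (Rabs (rstar - t) <= rstar + delta) by (apply Rabs_le; lra).
      pose proof (D_pos t). apply Rmult_le_compat; auto using Rabs_pos; lra. }
  unfold phi, c0. unfold Rdiv. rewrite Rabs_mult, Rabs_mult, Rabs_inv.
  rewrite (Rabs_pos_eq beta) by lra. rewrite (Rabs_pos_eq (D r)) by lra.
  apply Rmult_le_reg_r with (D r); auto.
  rewrite Rmult_assoc, Rinv_l, Rmult_1_r by lra.
  replace (beta * (rstar + delta) * A0 * r * D r) with (beta * ((r - 0) * ((rstar + delta) * (A0 * D r)))) by ring.
  apply Rmult_le_compat_l; lra.
Qed.

Lemma tail_bound eps : eps > 0 -> exists R, 1 <= R /\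
  forall r b, R <= r -> r <= b -> Rabs (RInt g0 r b) <= eps * D r.
Proof.
  intros heps. destruct (vs'_big (/ eps)) as [R1 [hR1 HR1]].
  pose proof rstar_nonneg.
  exists (Rmax R1 rstar). split. pose proof (Rmax_l R1 rstar); lra.
  intros r b hr hb. pose proof (Rmax_l R1 rstar). pose proof (Rmax_r R1 rstar).
  set (f := fun s => (s - rstar) * D s).
  assert (fc : forall x, 0 < x -> continuous f x).
  { intros x hx. unfold f. apply (continuous_mult (fun s => s - rstar) D).
    apply (continuous_minus (fun s => s) (fun _ => rstar)). apply continuous_id. apply continuous_const.
    apply D_cont; auto. }
  assert (E : RInt g0 r b = - RInt f r b).
  { rewrite <- RInt_opp_R by (apply ex_RInt_pos; auto; lra).
    apply RInt_ext_R. intros x hx. rewrite Rmin_left in hx by lra.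
    unfold g0, f. rewrite D0_eq by lra. ring. }
  assert (I1 : 0 <= RInt f r b).
  { apply RInt_ge_0; auto. apply ex_RInt_pos; auto; lra.
    intros x hx. unfold f. pose proof (D_pos x). apply Rmult_le_pos; lra. }
  assert (I2 : RInt f r b <= eps * D r - eps * D b).
  { apply (LI f (fun s => eps * D s) (fun s => eps * (- beta * vs' s * D s))); auto; try lra.
    intros x hx. apply is_derive_scal. apply D_deriv; auto.
    intros x hx. unfold f. pose proof (D_pos x).
    assert (HH : / eps * x <= beta * vs' x) by (apply HR1; lra).
    assert (x <= eps * (beta * vs' x)).
    { apply Rmult_le_compat_l with (r := eps) in HH; [|lra].
      rewrite <- Rmult_assoc, Rinv_r, Rmult_1_l in HH by lra. exact HH. }
    assert ((x - rstar) * D x <= (eps * (beta * vs' x)) * D x) by (apply Rmult_le_compat_r; lra).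
    lra. }
  rewrite E, Rabs_Ropp, Rabs_pos_eq by lra. pose proof (D_pos b). nra.
Qed.

Lemma G_to0 eta : eta > 0 -> exists B, forall b, B <= b -> Rabs (G b) < eta.
Proof.
  intros heta. pose proof rstar_nonneg.
  assert (hK : 0 < K0) by (unfold K0; apply exp_pos).
  set (e1 := eta / (3 * (rstar + 1))).
  assert (he1 : e1 > 0) by (unfold e1; apply Rdiv_lt_0_compat; lra).
  destruct (hZlim e1 he1) as [a0 [b0 [h0 H0]]].
  destruct (hm1lim e1 he1) as [a1 [b1 [h1 H1]]].
  set (a2 := Rmin (delta / 2) 1).
  assert (ha2 : 0 < a2) by (apply Rmin_glb_lt; lra).
  set (e2 := eta / (3 * ((rstar + 1) * K0 + 1))).
  assert (he2 : 0 < e2) by (unfold e2; apply Rdiv_lt_0_compat; nra).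
  set (a := Rmin (Rmin a0 a1) (Rmin a2 e2)).
  assert (ha : 0 < a) by (unfold a; repeat apply Rmin_glb_lt; lra).
  assert (ha0 : a <= a0) by (unfold a; pose proof (Rmin_l (Rmin a0 a1) (Rmin a2 e2)); pose proof (Rmin_l a0 a1); lra).
  assert (ha1 : a <= a1) by (unfold a; pose proof (Rmin_l (Rmin a0 a1) (Rmin a2 e2)); pose proof (Rmin_r a0 a1); lra).
  assert (ha2' : a <= a2) by (unfold a; pose proof (Rmin_r (Rmin a0 a1) (Rmin a2 e2)); pose proof (Rmin_l a2 e2); lra).
  assert (hae : a <= e2) by (unfold a; pose proof (Rmin_r (Rmin a0 a1) (Rmin a2 e2)); pose proof (Rmin_r a2 e2); lra).
  assert (ha2d : a2 <= delta / 2) by apply Rmin_l.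
  assert (ha21 : a2 <= 1) by apply Rmin_r.
  exists (Rmax (Rmax b0 b1) a). intros b hb.
  pose proof (Rmax_l (Rmax b0 b1) a). pose proof (Rmax_r (Rmax b0 b1) a).
  pose proof (Rmax_l b0 b1). pose proof (Rmax_r b0 b1).
  specialize (H0 a b ltac:(lra) ltac:(lra)). specialize (H1 a b ltac:(lra) ltac:(lra)).
  assert (HGa : Rabs (G a) <= (a - 0) * ((rstar + 1) * K0)).
  { apply abs_RInt_le_const; [lra | apply ex_RInt_g0; lra |].
    intros t ht. unfold g0. rewrite Rabs_mult.
    assert (Rabs (rstar - t) <= rstar + 1) by (apply Rabs_le; lra).
    assert (HD : Rabs (D0 t) <= K0 * Rabs t) by (apply D0_bound; rewrite Rabs_pos_eq; unfold a2 in *; lra).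
    rewrite (Rabs_pos_eq t) in HD by lra.
    apply Rmult_le_compat; auto using Rabs_pos; nra. }
  assert (HGa2 : (a - 0) * ((rstar + 1) * K0) < eta / 3).
  { assert ((a - 0) * ((rstar + 1) * K0) <= e2 * ((rstar + 1) * K0)) by (apply Rmult_le_compat_r; nra).
    assert (e2 * ((rstar + 1) * K0) < eta / 3); [|lra].
    unfold e2. apply Rmult_lt_reg_r with (3 * ((rstar + 1) * K0 + 1)); [nra|].
    replace (eta / (3 * ((rstar + 1) * K0 + 1)) * ((rstar + 1) * K0) * (3 * ((rstar + 1) * K0 + 1)))
      with (eta * ((rstar + 1) * K0)) by (field; nra). nra. }
  assert (EG : G b = G a + (rstar * RInt D a b - RInt (fun s => s * D s) a b)).
  { unfold G. rewrite <- (RInt_Chasles_R g0 0 a b) by (apply ex_RInt_g0; lra).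
    f_equal. rewrite <- RInt_scal_R by (apply ex_RInt_pos; try lra; apply D_cont).
    rewrite <- RInt_minus_R.
    2:{ apply ex_RInt_pos; try lra. intros; apply (continuous_scal_r rstar D). apply D_cont; auto. }
    2:{ apply ex_RInt_pos; try lra. intros; apply (continuous_mult (fun s => s) D). apply continuous_id. apply D_cont; auto. }
    apply RInt_ext_R. intros x hx. rewrite Rmin_left in hx by lra.
    unfold g0. rewrite D0_eq by lra. ring. }
  assert (Er : rstar * Z = m1) by (unfold rstar; field; lra).
  rewrite EG.
  replace (rstar * RInt D a b - RInt (fun s => s * D s) a b) with
    (rstar * (RInt D a b - Z) - (RInt (fun s => s * D s) a b - m1)) by (rewrite <- Er; ring).
  eapply Rle_lt_trans. apply Rabs_triang.
  eapply Rle_lt_trans. apply Rplus_le_compat_l. apply Rabs_triang.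
  rewrite Rabs_Ropp, Rabs_mult, (Rabs_pos_eq rstar) by lra.
  assert (rstar * Rabs (RInt D a b - Z) <= rstar * e1) by (apply Rmult_le_compat_l; lra).
  assert ((rstar + 1) * e1 = eta / 3) by (unfold e1; field; lra).
  nra.
Qed.

Lemma phi_far eps : eps > 0 -> exists R, 1 <= R /\ forall r, R <= r -> Rabs (phi r) <= eps.
Proof.
  intros heps. destruct (tail_bound (eps / beta)) as [R [hR HR]].
  apply Rdiv_lt_0_compat; lra.
  exists R. split; auto. intros r hr.
  pose proof (D_pos r).
  assert (HGr : Rabs (G r) <= eps / beta * D r).
  { apply le_of_forall_lt. intros eta heta.
    destruct (G_to0 eta heta) as [B HB].
    set (b := Rmax B r). pose proof (Rmax_l B r : B <= b). pose proof (Rmax_r B r : r <= b).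
    assert (E : G r = G b - RInt g0 r b).
    { unfold G. rewrite <- (RInt_Chasles_R g0 0 r b) by (apply ex_RInt_g0; lra). simpl. lra. }
    rewrite E. eapply Rle_lt_trans. apply Rabs_triang. rewrite Rabs_Ropp.
    specialize (HB b ltac:(lra)). specialize (HR r b ltac:(lra) ltac:(lra)). lra. }
  unfold phi, Rdiv. rewrite Rabs_mult, Rabs_mult, Rabs_inv.
  rewrite (Rabs_pos_eq beta) by lra. rewrite (Rabs_pos_eq (D r)) by lra.
  apply Rmult_le_reg_r with (D r); auto.
  rewrite Rmult_assoc, Rinv_l, Rmult_1_r by lra.
  apply Rmult_le_compat_l with (r := beta) in HGr; [|lra].
  replace (beta * (eps / beta * D r)) with (eps * D r) in HGr by (field; lra). exact HGr.
Qed.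


Lemma phi_bounded : exists B, 0 <= B /\ forall r, 0 < r -> Rabs (phi r) <= B.
Proof.
  destruct (phi_far 1 ltac:(lra)) as [R1 [hR1 HR1]].
  set (R2 := Rmax R1 delta).
  assert (hR2 : delta <= R2) by apply Rmax_r. assert (hR2' : R1 <= R2) by apply Rmax_l.
  destruct (continuity_ab_maj (fun r => Rabs (phi r)) (delta / 2) R2) as [Mx [HMx hMx]]. lra.
  { intros c hc. apply continuity_pt_filterlim. apply continuous_Rabs_comp. apply phi_cont. lra. }
  pose proof rstar_nonneg. pose proof A0_pos.
  assert (hc0 : 0 <= c0) by (unfold c0; apply Rmult_le_pos; [apply Rmult_le_pos|]; lra).
  exists (Rmax (c0 * delta) (Rmax 1 (Rabs (phi Mx)))). split.
  { apply Rle_trans with 1. lra. eapply Rle_trans; [|apply Rmax_r]. apply Rmax_l. }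
  intros r hr.
  pose proof (Rmax_l (c0 * delta) (Rmax 1 (Rabs (phi Mx)))).
  pose proof (Rmax_r (c0 * delta) (Rmax 1 (Rabs (phi Mx)))).
  pose proof (Rmax_l 1 (Rabs (phi Mx))). pose proof (Rmax_r 1 (Rabs (phi Mx))).
  destruct (Rlt_or_le r delta).
  - assert (Rabs (phi r) <= c0 * r) by (apply phi_near0; lra).
    assert (c0 * r <= c0 * delta) by (apply Rmult_le_compat_l; lra). lra.
  - destruct (Rle_or_lt R1 r).
    + specialize (HR1 r H6). lra.
    + assert (Rabs (phi r) <= Rabs (phi Mx)) by (apply (HMx r); lra). lra.
Qed.

Definition Phi r := RInt phi 1 r.

Lemma Phi_deriv r : 0 < r -> is_derive Phi r (phi r).
Proof. intros hr. apply RInt_deriv_pos; auto. apply phi_cont. lra. Qed.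

Lemma Phi_bound B : 0 <= B -> (forall r, 0 < r -> Rabs (phi r) <= B) ->
  forall r, 0 < r -> Rabs (Phi r) <= B * Rabs (r - 1).
Proof.
  intros hB HB r hr. unfold Phi.
  destruct (Rle_or_lt 1 r).
  - rewrite (Rabs_pos_eq (r - 1)) by lra. rewrite Rmult_comm.
    apply abs_RInt_le_const; auto. apply ex_RInt_pos; try lra; apply phi_cont.
    intros; apply HB; lra.
  - rewrite <- RInt_swap_R by (apply ex_RInt_pos; try lra; apply phi_cont).
    rewrite Rabs_Ropp. rewrite (Rabs_left (r - 1)) by lra. replace (- (r - 1)) with (1 - r) by ring.
    rewrite Rmult_comm.
    apply abs_RInt_le_const; try lra. apply ex_RInt_pos; try lra; apply phi_cont.
    intros; apply HB; lra.
Qed.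

Lemma L2_of_bound (f : R -> R) c : 0 <= c ->
  (forall x, 0 < x -> continuous f x) ->
  (forall x, 0 < x -> f x ^ 2 * D x <= c * h x) ->
  L2pistar d beta v f.
Proof.
  intros hc Hc Hle.
  assert (Hc2 : forall x, 0 < x -> continuous (fun x => f x ^ 2 * D x) x).
  { intros x hx. apply (continuous_mult (fun x => f x ^ 2) D); [|apply D_cont; auto].
    simpl. apply (continuous_mult f (fun x => f x * 1)); auto.
    apply (continuous_mult f (fun _ => 1)); auto. apply continuous_const. }
  assert (Hp : forall x, 0 < x -> 0 <= f x ^ 2 * D x).
  { intros x hx. pose proof (D_pos x). apply Rmult_le_pos; [apply pow2_ge_0|lra]. }
  destruct (LS (fun x => f x ^ 2 * D x) Hc2 Hp (bound_by_h _ c hc Hc2 Hle)) as [l [_ Hl]].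
  exists l. apply LS_improper; auto.
Qed.

Lemma const_of_zero_der (w : R -> R) : (forall x, 0 < x -> is_derive w x 0) ->
  forall x y, 0 < x -> 0 < y -> w x = w y.
Proof.
  intros Hw.
  assert (H : forall x y, 0 < x -> x <= y -> w x = w y).
  { intros x y hx hxy.
    assert (w y <= w x) by (apply (LM w (fun _ => 0)); auto; intros; [apply Hw; lra | lra]).
    assert (- w y <= - w x).
    { apply (LM (fun t => - w t) (fun _ => 0)); auto; intros; [|lra].
      eapply is_derive_eqv. apply (is_derive_opp w). apply Hw; lra. unfold opp; simpl; lra. }
    lra. }
  intros x y hx hy. destruct (Rle_or_lt x y). apply H; auto. symmetry; apply H; lra.
Qed.

Lemma D_to0 eta : eta > 0 -> exists S, 1 <= S /\ forall s, S <= s -> D s <= eta.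
Proof.
  intros heta. destruct h_decay as [R [hR HR]].
  pose proof (h_pos R).
  exists (Rmax R (h R / eta)). split. pose proof (Rmax_l R (h R / eta)); lra.
  intros s hs. pose proof (Rmax_l R (h R / eta)). pose proof (Rmax_r R (h R / eta)).
  assert (hsR : h s <= h R).
  { apply (LM h h'); try lra. intros; apply h_deriv; lra. intros; apply HR; lra. }
  pose proof (D_pos s).
  assert (s * D s <= h s) by (unfold h; apply Rmult_le_compat_r; nra).
  assert (h R / eta * eta = h R) by (field; lra).
  assert (s * D s <= h R) by lra.
  assert (h R / eta * D s <= s * D s) by (apply Rmult_le_compat_r; lra).
  assert (h R / eta * D s <= h R / eta * eta) by lra.
  destruct (Rle_or_lt (D s) eta); auto.
  assert (h R / eta * eta < h R / eta * D s). { apply Rmult_lt_compat_l; auto. apply Rdiv_lt_0_compat; lra. }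
  lra.
Qed.

Lemma uniq (psi : R -> R) : good_solution d beta v v' rstar psi -> forall r, 0 < r -> psi r = phi r.
Proof.
  intros [[psi' Hpsi] [[l [_ Hl]] _]].
  assert (Hpd : forall r, 0 < r -> is_derive psi r (beta * (rstar - r + vs' r * psi r))).
  { intros r hr. destruct (Hpsi r hr) as [h1 h2]. apply is_derive_Reals in h1.
    eapply is_derive_eqv. exact h1. change (psi' r = beta * (rstar - r + vs' r * psi r)). unfold vs'. rewrite <- h2. field. lra. }
  set (w := fun r => (psi r - phi r) * D r).
  assert (Hw : forall x, 0 < x -> is_derive w x 0).
  { intros x hx. unfold w. eapply is_derive_eqv.
    apply (is_derive_mult (fun r => psi r - phi r) D).
    apply (is_derive_minus psi phi). apply Hpd; auto. apply phi_deriv; auto.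
    apply D_deriv; auto. intros; apply Rmult_comm.
    unfold minus, plus, opp, mult; simpl. ring. }
  set (c := w 1).
  assert (Hc : forall r, 0 < r -> w r = c) by (intros; apply const_of_zero_der; auto; lra).
  destruct (Req_dec c 0) as [c0z | cnz].
  { intros r hr. specialize (Hc r hr). unfold w in Hc. pose proof (D_pos r).
    rewrite c0z in Hc. apply Rmult_integral in Hc. destruct Hc; lra. }
  exfalso.
  destruct phi_bounded as [B [hB HB]].
  assert (hca : 0 < Rabs c) by (apply Rabs_pos_lt; auto).
  destruct (D_to0 (Rmin 1 (Rabs c / (2 * (B + 1))))) as [S [hS HS]].
  { apply Rmin_glb_lt. lra. apply Rdiv_lt_0_compat; lra. }
  assert (Hlow : forall s, S <= s -> c ^ 2 / 4 <= psi s ^ 2 * D s).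
  { intros s hs. specialize (HS s hs). pose proof (D_pos s).
    pose proof (Rmin_l 1 (Rabs c / (2 * (B + 1)))). pose proof (Rmin_r 1 (Rabs c / (2 * (B + 1)))).
    specialize (HB s ltac:(lra)).
    assert (Hwc := Hc s ltac:(lra)). unfold w in Hwc.
    set (u := phi s * D s).
    assert (hu : Rabs u <= Rabs c / 2).
    { unfold u. rewrite Rabs_mult, (Rabs_pos_eq (D s)) by lra.
      assert (Rabs (phi s) * D s <= B * (Rabs c / (2 * (B + 1)))) by (apply Rmult_le_compat; auto using Rabs_pos; lra).
      assert (B * (Rabs c / (2 * (B + 1))) <= Rabs c / 2).
      { apply Rmult_le_reg_r with (2 * (B + 1)); [lra|].
        replace (B * (Rabs c / (2 * (B + 1))) * (2 * (B + 1))) with (B * Rabs c) by (field; lra). nra. }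
      lra. }
    assert (Eps : psi s * D s = u + c) by (unfold u; rewrite <- Hwc; ring).
    assert (Hsq : c ^ 2 / 4 <= (u + c) ^ 2).
    { assert (Rabs c / 2 <= Rabs (u + c)).
      { pose proof (Rabs_triang_inv c (- u)) as T. rewrite Rabs_Ropp in T.
        replace (c - - u) with (u + c) in T by ring. lra. }
      assert (E1 : c ^ 2 = Rabs c ^ 2) by (rewrite <- Rsqr_pow2, <- Rsqr_pow2; apply Rsqr_abs).
      assert (E2 : (u + c) ^ 2 = Rabs (u + c) ^ 2) by (rewrite <- Rsqr_pow2, <- Rsqr_pow2; apply Rsqr_abs).
      rewrite E1, E2. nra. }
    assert (psi s ^ 2 * D s * D s = (u + c) ^ 2) by (rewrite <- Eps; ring).
    assert (0 <= psi s ^ 2 * D s) by (apply Rmult_le_pos; [apply pow2_ge_0 | lra]).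
    assert (psi s ^ 2 * D s * D s <= psi s ^ 2 * D s * 1) by (apply Rmult_le_compat_l; lra).
    lra. }
  destruct (Hl 1 ltac:(lra)) as [a0 [b0 [hab0 Hab0]]].
  set (a := Rmin a0 S). set (b := Rmax b0 S + 4 * (Rabs l + 1) / c ^ 2 + 1).
  assert (ha : 0 < a) by (unfold a; apply Rmin_glb_lt; lra).
  assert (ha0 : a <= a0) by apply Rmin_l. assert (haS : a <= S) by apply Rmin_r.
  assert (hc2 : 0 < c ^ 2) by (apply pow2_gt_0; auto).
  assert (hq : 0 <= 4 * (Rabs l + 1) / c ^ 2) by (apply Rmult_le_pos; [pose proof (Rabs_pos l); lra | left; apply Rinv_0_lt_compat; auto]).
  assert (hb0 : b0 <= b) by (unfold b; pose proof (Rmax_l b0 S); lra).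
  assert (hbS : S + 4 * (Rabs l + 1) / c ^ 2 <= b) by (unfold b; pose proof (Rmax_r b0 S); lra).
  set (f := fun r => psi r ^ 2 * dens d beta v r).
  assert (fc : forall x, 0 < x -> continuous f x).
  { intros x hx. unfold f. apply (continuous_mult (fun x => psi x ^ 2) (dens d beta v)); [|apply D_cont; auto].
    assert (cp : continuous psi x) by (eapply cont_of_der; apply Hpd; auto).
    simpl. apply (continuous_mult psi (fun x => psi x * 1)); auto.
    apply (continuous_mult psi (fun _ => 1)); auto. apply continuous_const. }
  assert (fp : forall x, 0 < x -> 0 <= f x).
  { intros x hx. unfold f. pose proof (D_pos x). unfold D in H. apply Rmult_le_pos; [apply pow2_ge_0|lra]. }
  assert (pr : Riemann_integrable f a b) by (apply ex_RInt_Reals_0; apply ex_RInt_pos; auto; lra).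
  specialize (Hab0 a b pr ltac:(lra) hb0). rewrite <- RInt_Reals in Hab0.
  assert (I1 : RInt f S b <= RInt f a b) by (apply (RInt_mono_int f fc fp); lra).
  assert (I2 : RInt (fun _ => c ^ 2 / 4) S b <= RInt f S b).
  { apply RInt_le. lra. apply ex_RInt_const. apply ex_RInt_pos; auto; lra.
    intros x hx. apply Hlow. lra. }
  rewrite RInt_const_R in I2.
  assert ((b - S) * (c ^ 2 / 4) >= 4 * (Rabs l + 1) / c ^ 2 * (c ^ 2 / 4)).
  { apply Rle_ge, Rmult_le_compat_r; lra. }
  replace (4 * (Rabs l + 1) / c ^ 2 * (c ^ 2 / 4)) with (Rabs l + 1) in H by (field; lra).
  pose proof (Rle_abs l). apply Rabs_def2 in Hab0. destruct Hab0 as [Hab1 _]. change (RInt f a b - l < 1) in Hab1. lra.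
Qed.


Lemma sq_le_of_abs x B : Rabs x <= B -> x ^ 2 <= B ^ 2.
Proof.
  intros H. rewrite <- Rsqr_pow2, <- Rsqr_pow2. rewrite Rsqr_abs.
  apply Rsqr_incr_1; auto. apply Rabs_pos. pose proof (Rabs_pos x); lra.
Qed.

Lemma main_sec : exists phi : R -> R,
      good_solution d beta v v' rstar phi /\
      (forall psi : R -> R, good_solution d beta v v' rstar psi ->
         forall r, 0 < r -> psi r = phi r) /\
      (forall eps, eps > 0 -> exists delta, delta > 0 /\
         forall r, 0 < r < delta -> Rabs (phi r) < eps) /\
      (forall eps, eps > 0 -> exists R0,
         forall r, R0 < r -> Rabs (phi r) < eps).
Proof.
  destruct phi_bounded as [B [hB HB]].
  exists phi. split; [|split; [|split]].
  - split; [|split].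
    + exists (fun r => beta * (rstar - r + vs' r * phi r)). intros r hr. split.
      apply is_derive_Reals. apply phi_deriv; auto.
      unfold vs'. field. lra.
    + apply (L2_of_bound phi (B ^ 2)). apply pow2_ge_0. apply phi_cont.
      intros x hx. pose proof (D_pos x). pose proof (sq_le_of_abs _ _ (HB x hx)).
      unfold h. assert (0 <= x ^ 2) by apply pow2_ge_0. assert (phi x ^ 2 * D x <= B ^ 2 * D x) by (apply Rmult_le_compat_r; lra). assert (0 <= B ^ 2 * D x) by (apply Rmult_le_pos; [apply pow2_ge_0|lra]). nra.
    + exists Phi. split. intros r hr. apply is_derive_Reals. apply Phi_deriv; auto.
      apply (L2_of_bound Phi (2 * B ^ 2)). pose proof (pow2_ge_0 B); lra.
      intros x hx. eapply cont_of_der. apply Phi_deriv; auto.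
      intros x hx. pose proof (D_pos x).
      assert (H1 := Phi_bound B hB HB x hx).
      assert (H2 : Rabs (Phi x) <= Rabs (B * (x - 1))).
      { rewrite Rabs_mult, (Rabs_pos_eq B) by lra. lra. }
      apply sq_le_of_abs in H2. rewrite pow2_abs in H2.
      unfold h. assert (0 <= x ^ 2) by apply pow2_ge_0.
      assert ((B * (x - 1)) ^ 2 <= 2 * B ^ 2 * (1 + x ^ 2)).
      { replace ((B * (x - 1)) ^ 2) with (B ^ 2 * (x - 1) ^ 2) by ring.
        assert ((x - 1) ^ 2 <= 2 * (1 + x ^ 2)) by nra.
        pose proof (pow2_ge_0 B). nra. }
      assert (Phi x ^ 2 <= 2 * B ^ 2 * (1 + x ^ 2)) by lra.
      assert (Phi x ^ 2 * D x <= 2 * B ^ 2 * (1 + x ^ 2) * D x) by (apply Rmult_le_compat_r; lra).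
      lra.
  - apply uniq.
  - intros eps heps.
    pose proof rstar_nonneg. pose proof A0_pos.
    assert (hc0 : 0 <= c0) by (unfold c0; apply Rmult_le_pos; [apply Rmult_le_pos|]; lra).
    exists (Rmin delta (eps / (c0 + 1))). split.
    apply Rmin_glb_lt; auto. apply Rdiv_lt_0_compat; lra.
    intros r hr. pose proof (Rmin_l delta (eps / (c0 + 1))). pose proof (Rmin_r delta (eps / (c0 + 1))).
    assert (Rabs (phi r) <= c0 * r) by (apply phi_near0; lra).
    assert (c0 * r <= c0 * (eps / (c0 + 1))) by (apply Rmult_le_compat_l; lra).
    assert (c0 * (eps / (c0 + 1)) < eps).
    { apply Rmult_lt_reg_r with (c0 + 1); [lra|].
      replace (c0 * (eps / (c0 + 1)) * (c0 + 1)) with (c0 * eps) by (field; lra). nra. }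
    lra.
  - intros eps heps. destruct (phi_far (eps / 2) ltac:(lra)) as [R [hR HR]].
    exists R. intros r hr. specialize (HR r ltac:(lra)). lra.
Qed.


Lemma exists_Z : exists Zq, (forall a b, 0 < a -> a <= b -> RInt D a b <= Zq) /\
  (forall eps, eps > 0 -> exists a0 b0, 0 < a0 < b0 /\
      forall a b, 0 < a <= a0 -> b0 <= b -> Rabs (RInt D a b - Zq) < eps) /\ 0 < Zq.
Proof.
  assert (Hb : exists K, forall a b, 0 < a -> a <= b -> RInt D a b <= K).
  { apply (bound_by_h D 1). lra. apply D_cont. intros x hx. unfold h. pose proof (D_pos x).
    pose proof (pow2_ge_0 x). nra. }
  destruct (LS D D_cont (fun x _ => Rlt_le _ _ (D_pos x)) Hb) as [Zq [H1 H2]].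
  exists Zq. split; [|split]; auto.
  assert (H3 := H1 1 2 ltac:(lra) ltac:(lra)).
  destruct (MVT_gen (fun y => RInt D 1 y) 1 2 D) as [c [hc e]].
  - intros x hx. rewrite Rmin_left in hx by lra. rewrite Rmax_right in hx by lra.
    apply RInt_deriv_pos; try lra. apply D_cont.
  - intros x hx. rewrite Rmin_left in hx by lra. rewrite Rmax_right in hx by lra.
    apply continuity_pt_filterlim. apply RInt_cont_pos; try lra. apply D_cont.
  - simpl in e. rewrite RInt_point in e. unfold zero in e; simpl in e.
    pose proof (D_pos c). lra.
Qed.

Lemma exists_m1 : exists mq, (forall a b, 0 < a -> a <= b -> RInt (fun s => s * D s) a b <= mq) /\
  (forall eps, eps > 0 -> exists a0 b0, 0 < a0 < b0 /\
      forall a b, 0 < a <= a0 -> b0 <= b -> Rabs (RInt (fun s => s * D s) a b - mq) < eps).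
Proof.
  assert (Hc : forall x, 0 < x -> continuous (fun s => s * D s) x).
  { intros x hx. apply (continuous_mult (fun s => s) D). apply continuous_id. apply D_cont; auto. }
  assert (Hb : exists K, forall a b, 0 < a -> a <= b -> RInt (fun s => s * D s) a b <= K).
  { apply (bound_by_h _ 1). lra. auto. intros x hx. unfold h. pose proof (D_pos x).
    assert (x <= 1 + x ^ 2) by nra. nra. }
  assert (Hp : forall x, 0 < x -> 0 <= x * D x) by (intros x hx; pose proof (D_pos x); nra).
  destruct (LS _ Hc Hp Hb) as [mq [H1 H2]]. exists mq. auto.
Qed.

End S.

Theorem propositionC1 (d : nat) (beta : R) (v v' : R -> R)
  (hd : (2 <= d)%nat) (hbeta : 0 < beta)
  (hv : forall r, 0 < r -> derivable_pt_lim v r (v' r))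
  (hv'c : forall r, 0 < r -> continuity_pt v' r)
  (hlim0 : exists C delta, 0 < delta /\ forall r, 0 < r < delta -> v' r <= C)
  (hlimoo : forall M, exists R0, forall r, R0 < r -> v' r / r > M) :
  exists Zstar m1,
    0 < Zstar /\
    improper_int0inf (dens d beta v) Zstar /\
    improper_int0inf (fun r => r * dens d beta v r) m1 /\
    let rstar := m1 / Zstar in
    exists phi : R -> R,
      good_solution d beta v v' rstar phi /\
      (forall psi : R -> R, good_solution d beta v v' rstar psi ->
         forall r, 0 < r -> psi r = phi r) /\
      (forall eps, eps > 0 -> exists delta, delta > 0 /\
         forall r, 0 < r < delta -> Rabs (phi r) < eps) /\
      (forall eps, eps > 0 -> exists R0,
         forall r, R0 < r -> Rabs (phi r) < eps).
Proof.
  destruct hlim0 as [C [delta [hdel hC]]].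
  destruct (exists_Z d beta v v' hd hbeta hv C delta hdel hC hlimoo) as [Z [hZ1 [hZ2 hZ3]]].
  destruct (exists_m1 d beta v v' hd hbeta hv C delta hdel hC hlimoo) as [m1 [hm1 hm2]].
  exists Z, m1. split; [auto|split; [|split]].
  - apply LS_improper; auto. intros; eapply D_cont; eauto.
  - apply LS_improper; auto. intros x hx.
    apply (continuous_mult (fun s => s) (dens d beta v)). apply continuous_id.
    eapply D_cont; eauto.
  - cbv zeta. eapply main_sec with (C := C) (delta := delta) (Z := Z) (m1 := m1); eauto.
Qed.
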